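(* For every $n\in\mathbb N$, $TC(M_n)=1$, where $M_n$ is the algebra of complex $n\times n$ matrices.
   Context: All tensor products are minimal. For a unital $C^*$-algebra $A$ let $p_0,p_1:A\to A\otimes A$ be $p_0(a)=a\otimes 1$, $p_1(a)=1\otimes a$, and for $t\in[0,1]$ and a $C^*$-algebra $B$ let $\mathrm{ev}_t:B\otimes C[0,1]\to B$ be evaluation at $t$. The topological complexity $TC(A)$ is the minimal number $n$ such that there exist $C^*$-algebras $B_1,\dots,B_n$ with surjective $*$-homomorphisms $q_i:A\otimes A\to B_i$ satisfying $\bigcap_{i=1}^n\ker q_i=\{0\}$, together with $*$-homomorphisms $\sigma_i:A\to B_i\otimes C[0,1]$ such that $\mathrm{ev}_k\circ\sigma_i=q_i\circ p_k$ for $k=0,1$ and all $i$; $TC(A)=\infty$ if no such $n$ exists. *)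

(* Defs.v *)
(* with complex numbers R[i] from mathcomp-real-closed over an
   arbitrary R : realType (all such are isomorphic to the usual reals). *)
From HB Require Import structures.
From mathcomp Require Import all_boot all_order all_algebra.
From mathcomp Require Import reals.
From mathcomp Require Export complex mxtens.
Set Implicit Arguments. Unset Strict Implicit. Unset Printing Implicit Defensive.
Import Order.TTheory GRing.Theory Num.Theory.
Local Open Scope ring_scope.

Record CstarAlg (R : realType) := {
  cs_car :> lmodType R[i];
  cs_mul : cs_car -> cs_car -> cs_car;
  cs_star : cs_car -> cs_car;
  cs_norm : cs_car -> R;
  cs_mulA : forall x y z, cs_mul x (cs_mul y z) = cs_mul (cs_mul x y) z;
  cs_mulDl : forall x y z, cs_mul (x + y) z = cs_mul x z + cs_mul y z;
  cs_mulDr : forall x y z, cs_mul x (y + z) = cs_mul x y + cs_mul x z;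
  cs_mulZl : forall (c : R[i]) x y, cs_mul (c *: x) y = c *: cs_mul x y;
  cs_mulZr : forall (c : R[i]) x y, cs_mul x (c *: y) = c *: cs_mul x y;
  cs_starK : forall x, cs_star (cs_star x) = x;
  cs_starD : forall x y, cs_star (x + y) = cs_star x + cs_star y;
  cs_starZ : forall (c : R[i]) x, cs_star (c *: x) = conjc c *: cs_star x;
  cs_starM : forall x y, cs_star (cs_mul x y) = cs_mul (cs_star y) (cs_star x);
  cs_norm_ge0 : forall x, 0 <= cs_norm x;
  cs_norm_eq0 : forall x, cs_norm x = 0 -> x = 0;
  cs_normD : forall x y, cs_norm (x + y) <= cs_norm x + cs_norm y;
  cs_normZ : forall (c : R[i]) x, real_complex R (cs_norm (c *: x)) = `|c| * real_complex R (cs_norm x);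
  cs_normM : forall x y, cs_norm (cs_mul x y) <= cs_norm x * cs_norm y;
  cs_normC : forall x, cs_norm (cs_mul (cs_star x) x) = cs_norm x ^+ 2;
  cs_complete : forall u : nat -> cs_car,
    (forall e : R, 0 < e -> exists N : nat, forall m n : nat,
        (N <= m)%N -> (N <= n)%N -> cs_norm (u m - u n) < e) ->
    exists l : cs_car, forall e : R, 0 < e -> exists N : nat,
        forall n : nat, (N <= n)%N -> cs_norm (u n - l) < e
}.

Definition mxstar (R : realType) (m : nat) (a : 'M[R[i]]_m) : 'M[R[i]]_m :=
  (map_mx conjc a)^T.

Definition mx_star_hom (R : realType) (m : nat) (B : CstarAlg R)
    (f : 'M[R[i]]_m -> B) : Prop :=
  [/\ forall a b, f (a + b) = f a + f b,
      forall (c : R[i]) a, f (c *: a) = c *: f a,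
      forall a b, f (a * b) = cs_mul (f a) (f b)
    & forall a, f (mxstar a) = cs_star (f a)].

(* B (x) C[0,1] is realized as C([0,1], B), the continuous B-valued
   functions on [0,1] with pointwise operations and sup norm.  A map
   sigma : M_n -> C([0,1],B) is represented as sigma : M_n -> R -> B,
   only values on [0,1] being relevant.  It is a *-homomorphism iff each
   sigma a is continuous on [0,1] and each evaluation is a *-hom. *)
Definition in01 (R : realType) (t : R) : Prop := 0 <= t <= 1.

Definition cont01 (R : realType) (B : CstarAlg R) (g : R -> B) : Prop :=
  forall t, in01 t -> forall e : R, 0 < e -> exists2 d : R, 0 < d &
    forall s, in01 s -> `|s - t| < d -> cs_norm (g s - g t) < e.

Definition mx_path_hom (R : realType) (m : nat) (B : CstarAlg R)
    (sigma : 'M[R[i]]_m -> R -> B) : Prop :=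
  (forall a, cont01 (sigma a)) /\
  (forall t, in01 t -> mx_star_hom (fun a => sigma a t)).

(* M_n (x) M_n is realized as M_{n*n} (Kronecker product), with
   p0 a = a (x) 1 and p1 a = 1 (x) a. *)
Definition p0 (R : realType) (n : nat) (a : 'M[R[i]]_n) : 'M[R[i]]_(n * n) :=
  a *t (1%:M : 'M[R[i]]_n).
Definition p1 (R : realType) (n : nat) (a : 'M[R[i]]_n) : 'M[R[i]]_(n * n) :=
  (1%:M : 'M[R[i]]_n) *t a.

(* TC_witness R n k : there is a "k-piece" datum as in the definition of
   TC(M_n): C*-algebras B_i, surjective *-homs q_i : M_n(x)M_n -> B_i with
   jointly trivial kernel, and *-homs sigma_i : M_n -> B_i (x) C[0,1] with
   ev_0 o sigma_i = q_i o p0 and ev_1 o sigma_i = q_i o p1. *)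
Definition TC_witness (R : realType) (n k : nat) : Prop :=
  exists (B : 'I_k -> CstarAlg R)
         (q : forall i : 'I_k, 'M[R[i]]_(n * n) -> B i)
         (sigma : forall i : 'I_k, 'M[R[i]]_n -> R -> B i),
    [/\ forall i, mx_star_hom (q i),
        forall i, forall y : B i, exists x, q i x = y,
        forall x, (forall i, q i x = 0) -> x = 0,
        forall i, mx_path_hom (sigma i)
      & forall i a, sigma i a 0 = q i (p0 a) /\ sigma i a 1 = q i (p1 a)].

Definition TC_eq (R : realType) (n k : nat) : Prop :=
  TC_witness R n k /\ forall j : nat, (j < k)%N -> ~ TC_witness R n j.

(* Main.v *)
Require Import Defs.
From HB Require Import structures.
From mathcomp Require Import all_boot all_order all_algebra.
From mathcomp Require Import classical_sets reals complex mxtens.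
From mathcomp Require Import ring lra.
From mathcomp Require Import fingroup perm.
Set Implicit Arguments. Unset Strict Implicit. Unset Printing Implicit Defensive.
Import Order.TTheory GRing.Theory Num.Theory.
Local Open Scope ring_scope.
Local Open Scope complex_scope.
Section Vec.
Variable R : realType.
Local Notation C := R[i].
Local Notation Re := (@complex.Re R).
Local Notation Im := (@complex.Im R).
Variable m : nat.

Definition nc2 (z : C) : R := Re z ^+ 2 + Im z ^+ 2.
Definition ip (w u : 'cV[C]_m) : C := \sum_i conjc (w i 0) * u i 0.
Definition sqn (v : 'cV[C]_m) : R := \sum_i nc2 (v i 0).
Definition vn v := Num.sqrt (sqn v).

Lemma nc2_ge0 z : 0 <= nc2 z.
Proof. by rewrite /nc2 addr_ge0 // sqr_ge0. Qed.

Lemma sqn_ge0 v : 0 <= sqn v.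
Proof. by apply: sumr_ge0 => i _; apply: nc2_ge0. Qed.

Lemma vn_ge0 v : 0 <= vn v.
Proof. exact: sqrtr_ge0. Qed.

Lemma vn_sqr v : vn v ^+ 2 = sqn v.
Proof. by rewrite sqr_sqrtr // sqn_ge0. Qed.

Lemma Re_cjM (z w : C) : Re (conjc z * w) = Re z * Re w + Im z * Im w.
Proof. by case: z => a b; case: w => c d /=; ring. Qed.

Lemma Re_ip w u : Re (ip w u) = \sum_i (Re (w i 0) * Re (u i 0) + Im (w i 0) * Im (u i 0)).
Proof. by rewrite raddf_sum; apply: eq_bigr => i _; apply: Re_cjM. Qed.

Lemma Re_ip_self v : Re (ip v v) = sqn v.
Proof. by rewrite Re_ip; apply: eq_bigr => i _; rewrite /nc2 !expr2. Qed.

Lemma Re_ipC w u : Re (ip w u) = Re (ip u w).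
Proof. by rewrite !Re_ip; apply: eq_bigr => i _; rewrite mulrC [Im _ * _]mulrC. Qed.

Lemma ipDr w u1 u2 : ip w (u1 + u2) = ip w u1 + ip w u2.
Proof. by rewrite /ip -big_split; apply: eq_bigr => i _; rewrite mxE mulrDr. Qed.

Lemma ipDl w1 w2 u : ip (w1 + w2) u = ip w1 u + ip w2 u.
Proof. by rewrite /ip -big_split; apply: eq_bigr => i _; rewrite mxE rmorphD mulrDl. Qed.

Lemma ipZr w c u : ip w (c *: u) = c * ip w u.
Proof. by rewrite /ip mulr_sumr; apply: eq_bigr => i _; rewrite mxE mulrCA. Qed.

Lemma ipZl w c u : ip (c *: w) u = conjc c * ip w u.
Proof. by rewrite /ip mulr_sumr; apply: eq_bigr => i _; rewrite mxE rmorphM mulrA. Qed.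

Lemma ip0r w : ip w 0 = 0.
Proof. by rewrite /ip big1 // => i _; rewrite mxE mulr0. Qed.

Lemma ip0l u : ip 0 u = 0.
Proof. by rewrite /ip big1 // => i _; rewrite mxE rmorph0 mul0r. Qed.

Lemma nc2Z c z : nc2 (c * z) = nc2 c * nc2 z.
Proof. by case: c => a b; case: z => x y; rewrite /nc2 /=; ring. Qed.

Lemma sqnZ c v : sqn (c *: v) = nc2 c * sqn v.
Proof. by rewrite /sqn mulr_sumr; apply: eq_bigr => i _; rewrite mxE nc2Z. Qed.

Lemma nc2_eq0 z : nc2 z = 0 -> z = 0.
Proof.
case: z => a b; rewrite /nc2 /= => /eqP; rewrite paddr_eq0 ?sqr_ge0 // !sqrf_eq0.
by case/andP => /eqP -> /eqP ->.
Qed.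

Lemma sqn_eq0 v : sqn v = 0 -> v = 0.
Proof.
move=> /eqP; rewrite psumr_eq0; last by move=> i _; apply: nc2_ge0.
move=> /allP H; apply/matrixP => i j; rewrite [j]ord1 mxE.
by apply: nc2_eq0; apply/eqP; apply: (H i); rewrite mem_index_enum.
Qed.

Lemma vn_eq0 v : vn v = 0 -> v = 0.
Proof. by move=> /eqP; rewrite sqrtr_eq0 => H; apply: sqn_eq0; apply/eqP; rewrite eq_le H sqn_ge0. Qed.

Definition nC (z : C) : R := Num.sqrt (nc2 z).

Lemma vnZ c v : vn (c *: v) = nC c * vn v.
Proof. by rewrite /vn sqnZ sqrtrM // nc2_ge0. Qed.

Lemma nc2R (r : R) : nc2 (r%:C) = r ^+ 2.
Proof. by rewrite /nc2 /= expr0n addr0. Qed.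

Lemma nCR (r : R) : nC (r%:C) = `|r|.
Proof. by rewrite /nC nc2R sqrtr_sqr. Qed.

Lemma ip_lam (l : R) w u : 0 < l ->
  2 * Re (ip w u) <= l * sqn w + l^-1 * sqn u.
Proof.
move=> l0; rewrite Re_ip /sqn !mulr_sumr -big_split /=; apply: ler_sum => i _.
rewrite /nc2.
set a := Re (w i 0); set b := Im (w i 0); set c := Re (u i 0); set d := Im (u i 0).
have hl : l * l^-1 = 1 by rewrite divff // gt_eqF.
have hi : 0 < l^-1 by rewrite invr_gt0.
set mu := l^-1 in hl hi *.
have : 0 <= mu * ((l * a - c) ^+ 2 + (l * b - d) ^+ 2).
  by apply: mulr_ge0; [exact: ltW | apply: addr_ge0; apply: sqr_ge0].
have E : mu * ((l * a - c) ^+ 2 + (l * b - d) ^+ 2) =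
  (l * mu) * (l * (a ^+ 2 + b ^+ 2)) - 2 * (l * mu) * (a * c + b * d) + mu * (c ^+ 2 + d ^+ 2) by ring.
rewrite E hl !mul1r -subr_ge0.
move=> H; apply: le_trans H _; rewrite le_eqVlt; apply/orP; left; apply/eqP; ring.
Qed.

Lemma ip_CS w u : Re (ip w u) <= vn w * vn u.
Proof.
have [w0|wn0] := eqVneq (vn w) 0.
  by rewrite (vn_eq0 w0) ip0l /= mulr_ge0 // vn_ge0.
have [u0|un0] := eqVneq (vn u) 0.
  by rewrite (vn_eq0 u0) ip0r /= mulr_ge0 // vn_ge0.
have wp : 0 < vn w by rewrite lt_def wn0 vn_ge0.
have up : 0 < vn u by rewrite lt_def un0 vn_ge0.
have := ip_lam w u (divr_gt0 up wp).
rewrite -!vn_sqr invf_div => H.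
have E : vn u / vn w * vn w ^+ 2 + vn w / vn u * vn u ^+ 2 = 2 * (vn w * vn u).
  by field; apply/andP; split.
rewrite E in H.
by rewrite -(ler_pM2l (ltr0Sn _ 1)).
Qed.

End Vec.
Section Norm.
Variable R : realType.
Local Notation C := R[i].
Local Notation Re := (@complex.Re R).
Local Notation Im := (@complex.Im R).
Variable m : nat.
Implicit Types X Y : 'M[C]_m.
Implicit Types v w : 'cV[C]_m.

Lemma ip_adj w X v : ip w (X *m v) = ip (mxstar X *m w) v.
Proof.
rewrite /ip; under eq_bigr do rewrite mxE mulr_sumr.
under [RHS]eq_bigr do rewrite mxE rmorph_sum mulr_suml.
rewrite exchange_big /=; apply: eq_bigr => i _; apply: eq_bigr => j _.
by rewrite !mxE rmorphM /= conjcK mulrA [_ * (w j 0)^*%C]mulrC.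
Qed.

Definition nS X := fun r : R => exists v w, [/\ sqn v <= 1, sqn w <= 1 & r = Re (ip w (X *m v))].
Definition mb X : R := \sum_i \sum_j (`|Re (X i j)| + `|Im (X i j)|).

Lemma nc2_le_sqn v i : nc2 (v i 0) <= sqn v.
Proof.
rewrite /sqn (bigD1 i) //= lerDl; apply: sumr_ge0 => k _; apply: nc2_ge0.
Qed.

Lemma Re_le_nC (z : C) : Re z <= nC z.
Proof.
case: z => a b; rewrite /nC /nc2 /=.
apply: le_trans (ler_norm a) _.
rewrite -sqrtr_sqr ler_sqrt; last by rewrite addr_ge0 ?sqr_ge0.
by rewrite lerDl sqr_ge0.
Qed.

Lemma nC_ge0 (z : C) : 0 <= nC z.
Proof. exact: sqrtr_ge0. Qed.

Lemma nCM (z w : C) : nC (z * w) = nC z * nC w.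
Proof. by rewrite /nC nc2Z sqrtrM // nc2_ge0. Qed.

Lemma nC_conj (z : C) : nC (conjc z) = nC z.
Proof. by case: z => a b; rewrite /nC /nc2 /= sqrrN. Qed.

Lemma nC_le1 (z : C) : nc2 z <= 1 -> nC z <= 1.
Proof. by move=> H; rewrite /nC -sqrtr1 ler_sqrt. Qed.

Lemma nC_le_abs (z : C) : nC z <= `|Re z| + `|Im z|.
Proof.
case: z => a b; rewrite /nC /nc2 /=.
rewrite -[X in _ <= X]ger0_norm ?addr_ge0 // -sqrtr_sqr ler_sqrt; last by rewrite sqr_ge0.
rewrite sqrrD !real_normK ?num_real //.
have h := mulr_ge0 (normr_ge0 a) (normr_ge0 b). rewrite mulr2n; lra.
Qed.

Lemma nS_mb X r : nS X r -> r <= mb X.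
Proof.
case=> v [w [hv hw ->]].
rewrite /ip raddf_sum /mb; apply: ler_sum => i _.
rewrite mxE mulr_sumr raddf_sum; apply: ler_sum => j _.
apply: le_trans (Re_le_nC _) _.
rewrite mulrA !nCM nC_conj.
apply: le_trans _ (nC_le_abs (X i j)).
have h1 := nC_le1 (le_trans (nc2_le_sqn w i) hw).
have h2 := nC_le1 (le_trans (nc2_le_sqn v j) hv).
have h3 := nC_ge0 (w i 0); have h4 := nC_ge0 (X i j); have h5 := nC_ge0 (v j 0).
apply: le_trans (_ : _ <= nC (w i 0) * nC (X i j)) _.
  by rewrite ler_piMr // mulr_ge0.
by rewrite ler_piMl.
Qed.

Lemma nS0 X : nS X 0.
Proof.
exists 0, 0; split.
- by rewrite /sqn big1 // => i _; rewrite mxE /nc2 /= expr0n addr0.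
- by rewrite /sqn big1 // => i _; rewrite mxE /nc2 /= expr0n addr0.
- by rewrite ip0l.
Qed.

Definition nrm X : R := sup (nS X).

Lemma has_sup_nS X : has_sup (nS X).
Proof. by split; [exists 0; apply: nS0 | exists (mb X) => r; apply: nS_mb]. Qed.

Lemma nrm_ub X v w : sqn v <= 1 -> sqn w <= 1 -> Re (ip w (X *m v)) <= nrm X.
Proof. by move=> hv hw; apply: sup_upper_bound (has_sup_nS X) _ _; exists v, w. Qed.

Lemma nrm_le X c : (forall v w, sqn v <= 1 -> sqn w <= 1 -> Re (ip w (X *m v)) <= c) ->
  nrm X <= c.
Proof.
move=> H; apply: ge_sup; first by exists 0; apply: nS0.
by move=> r [v [w [hv hw ->]]]; apply: H.
Qed.

Lemma nrm_ge0 X : 0 <= nrm X.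
Proof. by apply: sup_upper_bound (has_sup_nS X) _ (nS0 X). Qed.

Lemma nrm_mb X : nrm X <= mb X.
Proof. by apply: nrm_le => v w hv hw; apply: nS_mb; exists v, w. Qed.

End Norm.
Section Norm2.
Variable R : realType.
Local Notation C := R[i].
Local Notation Re := (@complex.Re R).
Local Notation Im := (@complex.Im R).
Variable m : nat.
Implicit Types X Y : 'M[C]_m.
Implicit Types v w : 'cV[C]_m.

Lemma mxstarK X : mxstar (mxstar X) = X.
Proof. by apply/matrixP => i j; rewrite !mxE conjcK. Qed.

Lemma mxstarM X Y : mxstar (X *m Y) = mxstar Y *m mxstar X.
Proof.
apply/matrixP => i j; rewrite !mxE rmorph_sum; apply: eq_bigr => k _.
by rewrite !mxE rmorphM /= mulrC.
Qed.

Lemma mxstarD X Y : mxstar (X + Y) = mxstar X + mxstar Y.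
Proof. by apply/matrixP => i j; rewrite !mxE rmorphD. Qed.

Lemma mxstarZ (c : C) X : mxstar (c *: X) = conjc c *: mxstar X.
Proof. by apply/matrixP => i j; rewrite !mxE rmorphM. Qed.

Lemma ReRM (r : R) (z : C) : Re (r%:C * z) = r * Re z.
Proof. by case: z => a b /=; ring. Qed.

Lemma vn_le1 v : sqn v <= 1 -> vn v <= 1.
Proof. by move=> H; rewrite /vn -sqrtr1 ler_sqrt. Qed.

Lemma sqn_normalize v : vn v != 0 -> sqn ((vn v)^-1%:C *: v) = 1.
Proof.
move=> h; rewrite sqnZ nc2R -vn_sqr exprVn mulVf //.
by rewrite expf_neq0.
Qed.

Lemma nrmK X v w : Re (ip w (X *m v)) <= nrm X * vn v * vn w.
Proof.
have [v0|vn0] := eqVneq (vn v) 0.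
  rewrite (vn_eq0 v0) mulmx0 ip0r /=.
  by rewrite !mulr_ge0 ?nrm_ge0 ?vn_ge0.
have [w0|wn0] := eqVneq (vn w) 0.
  rewrite (vn_eq0 w0) ip0l /=.
  by rewrite !mulr_ge0 ?nrm_ge0 ?vn_ge0.
have s1 : sqn ((vn v)^-1%:C *: v) <= 1 by rewrite sqn_normalize.
have s2 : sqn ((vn w)^-1%:C *: w) <= 1 by rewrite sqn_normalize.
move: (nrm_ub X s1 s2); rewrite -scalemxAr ipZr ipZl conjc_real ReRM ReRM.
have vp : 0 < vn v by rewrite lt_def vn0 vn_ge0.
have wp : 0 < vn w by rewrite lt_def wn0 vn_ge0.
rewrite mulrA -invfM ler_pdivrMl ?mulr_gt0 //.
by move=> H; apply: le_trans H _; rewrite le_eqVlt; apply/orP; left; apply/eqP; ring.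
Qed.

Lemma nrmK2 X v : vn (X *m v) <= nrm X * vn v.
Proof.
have [h|h] := eqVneq (vn (X *m v)) 0.
  by rewrite h mulr_ge0 ?nrm_ge0 ?vn_ge0.
have hp : 0 < vn (X *m v) by rewrite lt_def h vn_ge0.
have := nrmK X v (X *m v).
rewrite Re_ip_self -vn_sqr expr2.
by rewrite ler_pM2r.
Qed.

Lemma nrmD X Y : nrm (X + Y) <= nrm X + nrm Y.
Proof.
apply: nrm_le => v w hv hw.
by rewrite mulmxDl ipDr raddfD /= lerD // nrm_ub.
Qed.

Lemma nrmZle (c : C) X : nrm (c *: X) <= nC c * nrm X.
Proof.
apply: nrm_le => v w hv hw.
rewrite -scalemxAl ipZr -[c]conjcK -ipZl.
apply: le_trans (nrmK _ _ _) _.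
rewrite vnZ nC_conj.
have h1 := vn_le1 hv; have h2 := vn_le1 hw; have h3 := vn_ge0 v; have h4 := vn_ge0 w.
have h5 := nrm_ge0 X; have h6 := nC_ge0 c.
apply: le_trans (ler_pM _ _ (ler_piMr h5 h1) (ler_piMr h6 h2)) _; rewrite ?mulr_ge0 //.
by rewrite conjcK mulrC.
Qed.

Lemma nC_inv (c : C) : nC (c^-1) = (nC c)^-1.
Proof.
have [->|c0] := eqVneq c 0; first by rewrite invr0 /nC /nc2 /= expr0n addr0 sqrtr0 invr0.
have h : nC c * nC c^-1 = 1 by rewrite -nCM divff // /nC /nc2 /= expr0n expr1n addr0 sqrtr1.
by rewrite -[LHS]mul1r -(mulVf (_ : nC c != 0)) ?(mulrA, h, mulr1) // -?mulrA ?h ?mulr1 //;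
   apply/eqP => h0; move: h; rewrite h0 mul0r => /eqP; rewrite eq_sym oner_eq0.
Qed.

Lemma nrmZ (c : C) X : nrm (c *: X) = nC c * nrm X.
Proof.
apply/eqP; rewrite eq_le nrmZle /=.
have [->|c0] := eqVneq c 0.
  by rewrite /nC /nc2 /= expr0n addr0 sqrtr0 mul0r nrm_ge0.
have nc0 : 0 < nC c.
  rewrite lt_def nC_ge0 andbT; apply/eqP => h.
  by move/eqP: c0; apply; apply: nc2_eq0; move: h; rewrite /nC => /eqP; rewrite sqrtr_eq0 => h;
     apply/eqP; rewrite eq_le h nc2_ge0.
have := nrmZle c^-1 (c *: X); rewrite scalerA mulVf // scale1r nC_inv.
by rewrite ler_pdivlMl.
Qed.

Lemma nrmM X Y : nrm (X *m Y) <= nrm X * nrm Y.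
Proof.
apply: nrm_le => v w hv hw.
rewrite -mulmxA; apply: le_trans (nrmK _ _ _) _.
have h1 := vn_le1 hv; have h2 := vn_le1 hw; have h3 := vn_ge0 v; have h4 := vn_ge0 w.
have h5 := nrm_ge0 X; have h6 := nrm_ge0 Y.
have h7 := nrmK2 Y v.
apply: le_trans (ler_piMr _ h2) _; first by rewrite mulr_ge0 // vn_ge0.
apply: (ler_wpM2l h5).
exact: le_trans h7 (ler_piMr h6 h1).
Qed.

Lemma nrm_star X : nrm (mxstar X) = nrm X.
Proof.
have H (Z : 'M[C]_m) : nrm (mxstar Z) <= nrm Z.
  apply: nrm_le => v w hv hw.
  by rewrite ip_adj mxstarK Re_ipC nrm_ub.
by apply/eqP; rewrite eq_le H /= -{1}(mxstarK X) H.
Qed.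

Lemma nrm_eq0 X : nrm X = 0 -> X = 0.
Proof.
move=> h; apply/matrixP => i j.
have := nrmK2 X (delta_mx j 0); rewrite h mul0r => h2.
have : vn (X *m delta_mx j 0) = 0 by apply/eqP; rewrite eq_le h2 vn_ge0.
move/vn_eq0; rewrite -colE => /matrixP /(_ i 0).
by rewrite !mxE.
Qed.

Lemma nrm_C X : nrm (mxstar X *m X) = nrm X ^+ 2.
Proof.
apply/eqP; rewrite eq_le; apply/andP; split.
  by apply: le_trans (nrmM _ _) _; rewrite nrm_star expr2.
have hy := nrm_ge0 (mxstar X *m X).
have H : nrm X <= Num.sqrt (nrm (mxstar X *m X)).
  apply: nrm_le => v w hv hw.
  apply: le_trans (ip_CS _ _) _.
  apply: le_trans (ler_piMl (vn_ge0 _) (vn_le1 hw)) _.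
  rewrite /vn ler_sqrt //.
  rewrite -Re_ip_self ip_adj mulmxA Re_ipC.
  by apply: nrm_ub.
have h0 := nrm_ge0 X.
have := ler_pM h0 h0 H H.
by rewrite -expr2 -expr2 sqr_sqrtr.
Qed.


End Norm2.

Section Complete.
Variable R : realType.
Local Notation C := R[i].
Local Notation Re := (@complex.Re R).
Local Notation Im := (@complex.Im R).

Lemma cauchyR (x : nat -> R) :
  (forall e : R, 0 < e -> exists N : nat, forall a b : nat, (N <= a)%N -> (N <= b)%N -> `|x a - x b| < e) ->
  exists l : R, forall e : R, 0 < e -> exists N : nat, forall n : nat, (N <= n)%N -> `|x n - l| < e.
Proof.
move=> H.
pose S := fun y : R => exists N : nat, forall n : nat, (N <= n)%N -> y <= x n.
have [N1 H1] := H 1 ltr01.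
have lbS e N0 : (forall a b : nat, (N0 <= a)%N -> (N0 <= b)%N -> `|x a - x b| < e) -> S (x N0 - e).
  move=> HN; exists N0 => n hn; have := HN n N0 hn (leqnn _).
  by rewrite ltr_norml => /andP[h1 h2]; lra.
have ubS e N0 : (forall a b : nat, (N0 <= a)%N -> (N0 <= b)%N -> `|x a - x b| < e) ->
   forall y, S y -> y <= x N0 + e.
  move=> HN y [N hN]; have := hN (maxn N N0) (leq_maxl _ _).
  have := HN (maxn N N0) N0 (leq_maxr _ _) (leqnn _).
  by rewrite ltr_norml => /andP[h1 h2] h3; lra.
have neS : S (x N1 - 1) by apply: lbS.
exists (sup S) => e e0.
have e20 : 0 < e / 2 by rewrite divr_gt0.
have [N0 H0] := H _ e20.
have hs : has_sup S by split; [exists (x N1 - 1) | exists (x N1 + 1) => y; apply: ubS].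
have h1 : x N0 - e / 2 <= sup S by apply: sup_upper_bound hs _ (lbS _ _ H0).
have h2 : sup S <= x N0 + e / 2 by apply: ge_sup; [exists (x N1 - 1) | move=> y; apply: ubS].
exists N0 => n hn; have := H0 n N0 hn (leqnn _).
rewrite !ltr_norml => /andP[h3 h4]; apply/andP; split; lra.
Qed.

Variable m : nat.
Implicit Types X : 'M[C]_m.

Lemma ip_delta (i : 'I_m) (u : 'cV[C]_m) : ip (delta_mx i 0) u = u i 0.
Proof.
rewrite /ip (bigD1 i) //= big1 ?addr0.
  by rewrite mxE conjc_nat !eqxx mul1r.
by move=> k hk; rewrite mxE conjc_nat (negbTE hk) mul0r.
Qed.

Lemma sqn_delta (i : 'I_m) : sqn (delta_mx i 0 : 'cV[C]_m) = 1.
Proof.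
rewrite /sqn (bigD1 i) //= big1 ?addr0.
  by rewrite mxE !eqxx /= /nc2 /= expr1n expr0n addr0.
by move=> k hk; rewrite mxE (negbTE hk) /= /nc2 /= expr0n addr0.
Qed.

Lemma entry_le X (c : C) i j : nc2 c <= 1 ->
  Re c * Re (X i j) + Im c * Im (X i j) <= nrm X.
Proof.
move=> hc.
have hv : sqn (delta_mx j 0 : 'cV[C]_m) <= 1 by rewrite sqn_delta.
have hw : sqn (c *: (delta_mx i 0 : 'cV[C]_m)) <= 1 by rewrite sqnZ sqn_delta mulr1.
have := nrm_ub X hv hw.
by rewrite ipZl ip_delta -colE mxE Re_cjM.
Qed.

Lemma Re_entry X i j : `|Re (X i j)| <= nrm X.
Proof.
have h1 := entry_le X i j (c := 1); have h2 := entry_le X i j (c := -1).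
rewrite /nc2 /= !(expr0n, expr1n, sqrrN, oppr0, addr0, mul0r, mul1r, mulN1r) in h1 h2.
have := h1 (lexx _); have := h2 (lexx _).
rewrite ler_norml => a b; apply/andP; split; lra.
Qed.

Lemma Im_entry X i j : `|Im (X i j)| <= nrm X.
Proof.
have h1 := entry_le X i j (c := 'i); have h2 := entry_le X i j (c := -'i).
rewrite /nc2 /= !(expr0n, expr1n, sqrrN, oppr0, add0r, addr0, mul0r, mul1r, mulN1r) in h1 h2.
have := h1 (lexx _); have := h2 (lexx _).
rewrite ler_norml => a b; apply/andP; split; lra.
Qed.

Lemma nrm_complete (u : nat -> 'M[C]_m) :
  (forall e : R, 0 < e -> exists N : nat, forall a b : nat, (N <= a)%N -> (N <= b)%N -> nrm (u a - u b) < e) ->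
  exists L, forall e : R, 0 < e -> exists N : nat, forall n : nat, (N <= n)%N -> nrm (u n - L) < e.
Proof.
move=> H.
have cv (p : ('I_m * 'I_m)%type) : exists l : C,
   (forall e : R, 0 < e -> exists N : nat, forall n : nat, (N <= n)%N -> `|Re (u n p.1 p.2) - Re l| < e) /\ (forall e : R, 0 < e -> exists N : nat, forall n : nat, (N <= n)%N -> `|Im (u n p.1 p.2) - Im l| < e).
  have [|lr Hr] := @cauchyR (fun n => Re (u n p.1 p.2)).
    move=> e e0; have [N HN] := H e e0; exists N => a b ha hb.
    apply: le_lt_trans (HN a b ha hb).
    by have := Re_entry (u a - u b) p.1 p.2; rewrite !mxE raddfB.
  have [|li Hi] := @cauchyR (fun n => Im (u n p.1 p.2)).
    move=> e e0; have [N HN] := H e e0; exists N => a b ha hb.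
    apply: le_lt_trans (HN a b ha hb).
    by have := Im_entry (u a - u b) p.1 p.2; rewrite !mxE raddfB.
  by exists (lr +i* li); split.
have [f Hf] := fin_all_exists cv.
pose L := \matrix_(i, j) f (i, j).
exists L => e e0.
pose K := (m * m)%:R : R.
have K0 : 0 <= K by rewrite /K ler0n.
pose e' := e / (2 * K + 1).
have d0 : 0 < 2 * K + 1 by lra.
have e'0 : 0 < e' by rewrite divr_gt0.
have cN (p : ('I_m * 'I_m)%type) : exists N : nat, forall n : nat, (N <= n)%N ->
    and (`|Re (u n p.1 p.2) - Re (f p)| < e') (`|Im (u n p.1 p.2) - Im (f p)| < e').
  have [N1 h1] := (Hf p).1 e' e'0; have [N2 h2] := (Hf p).2 e' e'0.
  exists (maxn N1 N2) => n; rewrite geq_max => /andP[hn1 hn2].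
  by split; [apply: h1 | apply: h2].
have [g Hg] := fin_all_exists cN.
exists (\max_p g p) => n hn.
apply: le_lt_trans (nrm_mb _) _.
apply: le_lt_trans (_ : _ <= \sum_(i < m) \sum_(j < m) (e' + e')) _.
  apply: ler_sum => i _; apply: ler_sum => j _.
  have [a b] := Hg (i, j) n (leq_trans (leq_bigmax (i, j)) hn).
  rewrite !mxE raddfB /= raddfB /=.
  by apply: lerD; apply: ltW.
rewrite !sumr_const !card_ord -mulrnA -mulr_natr -/K.
have -> : e = e' * (2 * K + 1) by rewrite /e' divfK // gt_eqF.
have -> : e' * (2 * K + 1) = (e' + e') * K + e' by ring.
by rewrite ltrDl.
Qed.

End Complete.
Section Inst.
Variable R : realType.
Local Notation C := R[i].
Local Notation Re := (@complex.Re R).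
Local Notation Im := (@complex.Im R).

Lemma nrmZC (N : nat) (c : C) (x : 'M[C]_N) :
  (nrm (c *: x))%:C = `|c| * (nrm x)%:C.
Proof. by rewrite nrmZ rmorphM /= normc_def. Qed.

Definition MxC (N : nat) : CstarAlg R :=
  @Build_CstarAlg R 'M[C]_N (@mulmx C N N N) (@mxstar R N) (@nrm R N)
    (@mulmxA C N N N N) (@mulmxDl C N N N) (@mulmxDr C N N N)
    (fun c x y => esym (scalemxAl c x y)) (fun c x y => esym (scalemxAr c x y))
    (@mxstarK R N) (@mxstarD R N) (@mxstarZ R N) (@mxstarM R N)
    (@nrm_ge0 R N) (@nrm_eq0 R N) (@nrmD R N) (@nrmZC N) (@nrmM R N) (@nrm_C R N)
    (@nrm_complete R N).

End Inst.
Section Flip.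
Variable R : realType.
Local Notation C := R[i].
Variable n : nat.
Local Notation N := (n * n)%N.

Definition sw (k : 'I_N) : 'I_N :=
  mxtens_index ((mxtens_unindex k).2, (mxtens_unindex k).1).

Lemma swK : involutive sw.
Proof.
move=> k; rewrite /sw mxtens_indexK /=.
by rewrite -[RHS]mxtens_unindexK; congr mxtens_index; case: (mxtens_unindex k).
Qed.

Lemma sw_index (i j : 'I_n) : sw (mxtens_index (i, j)) = mxtens_index (j, i).
Proof. by rewrite /sw mxtens_indexK. Qed.

Definition swp : 'S_(n * n) := perm (can_inj swK).
Definition Fl : 'M[C]_N := perm_mx swp.

Lemma swp_invol : (swp * swp)%g = 1%g.
Proof. by apply/permP => k; rewrite permM !permE /= swK. Qed.

Lemma swpV : (swp^-1)%g = swp.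
Proof. by rewrite -[(swp^-1)%g]mulg1 -swp_invol mulKg. Qed.

Lemma FlFl : Fl *m Fl = 1%:M.
Proof. by rewrite /Fl -perm_mxM swp_invol perm_mx1. Qed.

Lemma Fl_star : mxstar Fl = Fl.
Proof.
by rewrite /mxstar /Fl map_perm_mx tr_perm_mx swpV.
Qed.

Lemma Fl_conj (X : 'M[C]_N) i j : (Fl *m X *m Fl) i j = X (sw i) (sw j).
Proof.
have -> : Fl *m X *m Fl = col_perm swp (row_perm swp X) by rewrite col_permE swpV row_permE.
by rewrite !mxE !permE.
Qed.

Lemma Fl_tens (a : 'M[C]_n) : Fl *m p0 a *m Fl = p1 a.
Proof.
apply/matrixP => i j; rewrite Fl_conj.
case: (mxtens_indexP i) => i1 i2; case: (mxtens_indexP j) => j1 j2.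
by rewrite !sw_index /p0 /p1 !tensmxE mulrC.
Qed.

End Flip.

Section Path.
Variable R : realType.
Local Notation C := R[i].
Variable n : nat.
Local Notation N := (n * n)%N.

Lemma p0D (a b : 'M[C]_n) : p0 (a + b) = p0 a + p0 b.
Proof. by apply/matrixP => i j; rewrite /p0 !mxE mulrDl. Qed.

Lemma p0Z (c : C) (a : 'M[C]_n) : p0 (c *: a) = c *: p0 a.
Proof. by apply/matrixP => i j; rewrite /p0 !mxE mulrA. Qed.

Lemma p0M (a b : 'M[C]_n) : p0 (a * b) = p0 a *m p0 b.
Proof. by rewrite /p0 tensmx_mul mul1mx. Qed.

Lemma mxstar1 k : mxstar (1%:M : 'M[C]_k) = 1%:M.
Proof. by rewrite /mxstar map_mx1 trmx1. Qed.

Lemma mxstar_tens k l (A : 'M[C]_k) (B : 'M[C]_l) : mxstar (A *t B) = mxstar A *t mxstar B.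
Proof. by rewrite /mxstar map_mxT trmx_tens. Qed.

Lemma p0star (a : 'M[C]_n) : p0 (mxstar a) = mxstar (p0 a).
Proof. by rewrite /p0 mxstar_tens mxstar1. Qed.

Lemma LF (x y x' y' : C) :
  (x *: 1%:M + y *: Fl R n) *m (x' *: 1%:M + y' *: Fl R n) =
  (x * x' + y * y') *: 1%:M + (x * y' + y * x') *: Fl R n.
Proof.
rewrite mulmxDl !mulmxDr -!scalemxAl -!scalemxAr !mul1mx !mulmx1 FlFl !scalerA.
rewrite !scalerDl [y * x' *: _ + _]addrC.
by rewrite addrACA.
Qed.

Definition aa (t : R) : R := (1 - t ^+ 2) / (1 + t ^+ 2).
Definition bb (t : R) : R := 2 * t / (1 + t ^+ 2).

Lemma den_neq0 (t : R) : 1 + t ^+ 2 != 0.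
Proof. by rewrite gt_eqF // ltr_pwDl // sqr_ge0. Qed.

Lemma ab1 t : aa t ^+ 2 + bb t ^+ 2 = 1.
Proof. by rewrite /aa /bb; field; rewrite den_neq0. Qed.

Definition Ut (t : R) : 'M[C]_N := (aa t)%:C *: 1%:M + ('i * (bb t)%:C) *: Fl R n.

Lemma Ut_star t : mxstar (Ut t) = (aa t)%:C *: 1%:M + (- ('i * (bb t)%:C)) *: Fl R n.
Proof.
rewrite /Ut mxstarD !mxstarZ mxstar1 Fl_star conjc_real; congr (_ + _ *: _).
by apply/eqP; rewrite eq_complex /= !(mul0r, mulr0, mul1r, add0r, subr0, oppr0) !eqxx.
Qed.

Lemma UstarU t : mxstar (Ut t) *m Ut t = 1%:M.
Proof.
rewrite Ut_star /Ut LF.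
have -> : (aa t)%:C * (aa t)%:C + - ('i * (bb t)%:C) * ('i * (bb t)%:C) = 1.
  apply/eqP; rewrite eq_complex /=; apply/andP; split; apply/eqP; last by ring.
  by apply: (etrans _ (ab1 t)); ring.
have -> : (aa t)%:C * ('i * (bb t)%:C) + - ('i * (bb t)%:C) * (aa t)%:C = 0 by ring.
by rewrite scale1r scale0r addr0.
Qed.

Definition sig (a : 'M[C]_n) (t : R) : 'M[C]_N := Ut t *m p0 a *m mxstar (Ut t).

Lemma sig_hom t : mx_star_hom (B := MxC R N) (fun a => sig a t).
Proof.
split.
- by move=> a b; rewrite /sig p0D mulmxDr mulmxDl.
- by move=> c a; rewrite /sig p0Z -scalemxAr -scalemxAl.
- move=> a b /=; rewrite /sig p0M !mulmxA.
  by rewrite -[Ut t *m p0 a *m mxstar (Ut t) *m Ut t]mulmxA UstarU mulmx1.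
- by move=> a /=; rewrite /sig p0star !mxstarM mxstarK !mulmxA.
Qed.

Lemma aa0 : aa 0 = 1.
Proof. by rewrite /aa expr0n /= subr0 addr0 divr1. Qed.
Lemma bb0 : bb 0 = 0.
Proof. by rewrite /bb mulr0 mul0r. Qed.
Lemma aa1 : aa 1 = 0.
Proof. by rewrite /aa expr1n subrr mul0r. Qed.
Lemma bb1 : bb 1 = 1.
Proof. by rewrite /bb expr1n mulr1 divff // pnatr_eq0. Qed.

Lemma sig0 a : sig a 0 = p0 a.
Proof.
rewrite /sig /Ut aa0 bb0 rmorph0 mulr0 scale0r addr0 rmorph1 scale1r.
by rewrite mxstar1 mul1mx mulmx1.
Qed.

Lemma sig1 a : sig a 1 = p1 a.
Proof.
rewrite /sig /Ut aa1 bb1 rmorph0 scale0r add0r rmorph1 mulr1.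
rewrite mxstarZ Fl_star -scalemxAr -!scalemxAl !scalerA.
have -> : conjc (Complex 0 1) * Complex 0 1 = 1%R :> C.
  by apply/eqP; rewrite eq_complex /= !(mul0r, mulr0, mul1r, mulN1r, add0r, sub0r, addr0, subr0, oppr0, opprK) !eqxx.
by rewrite scale1r Fl_tens.
Qed.

Lemma mxstarB k (X Y : 'M[C]_k) : mxstar (X - Y) = mxstar X - mxstar Y.
Proof. by rewrite mxstarD -scaleN1r mxstarZ rmorphN1 scaleN1r. Qed.
Lemma sig_diff a s t : sig a s - sig a t =
  (Ut s - Ut t) *m p0 a *m mxstar (Ut s) + Ut t *m p0 a *m mxstar (Ut s - Ut t).
Proof.
rewrite mxstarB mulmxBr mulmxBl mulmxBl.
rewrite /sig . 
by rewrite addrA subrK.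
Qed.
Lemma U_diff s t : Ut s - Ut t =
  (aa s - aa t)%:C *: 1%:M + ('i * (bb s - bb t)%:C) *: Fl R n.
Proof.
rewrite /Ut  opprD addrACA -!scalerBl -mulrBr.
congr (_ *: _ + (_ * _) *: _).
  by apply/eqP; rewrite eq_complex /= subr0 !eqxx.
by apply/eqP; rewrite eq_complex /= subr0 !eqxx.
Qed.
Lemma nC_i : nC (Complex 0 1 : C) = 1.
Proof. by rewrite /nC /nc2 /= expr0n expr1n add0r sqrtr1. Qed.

Lemma nrm_U2 (x y : R) : nrm ((x%:C) *: (1%:M : 'M[C]_N) + ('i * y%:C) *: Fl R n)
   <= `|x| * nrm (1%:M : 'M[C]_N) + `|y| * nrm (Fl R n).
Proof. by apply: le_trans (nrmD _ _) _; rewrite !nrmZ nCM nC_i mul1r !nCR. Qed.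

Lemma in01_ab (t : R) : 0 <= t <= 1 -> `|aa t| <= 1 /\ `|bb t| <= 1.
Proof.
case/andP => t0 t1.
have d0 : 0 < 1 + t ^+ 2 by rewrite ltr_pwDl // sqr_ge0.
have t21 : t ^+ 2 <= 1 by rewrite expr_le1.
have tt := sqr_ge0 t.
split.
  rewrite /aa ger0_norm; last by rewrite divr_ge0 ?subr_ge0 // ltW.
  by rewrite ler_pdivrMr // mul1r; lra.
rewrite /bb ger0_norm; last by rewrite divr_ge0 ?mulr_ge0 // ltW.
rewrite ler_pdivrMr // mul1r; have := sqr_ge0 (t - 1); rewrite sqrrB expr1n mulr1; lra.
Qed.
Lemma aa_lip (s t : R) : 0 <= s <= 1 -> 0 <= t <= 1 -> `|aa s - aa t| <= 4 * `|s - t|.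
Proof.
case/andP => s0 s1; case/andP => t0 t1.
have ds : 0 < 1 + s ^+ 2 by rewrite ltr_pwDl // sqr_ge0.
have dt : 0 < 1 + t ^+ 2 by rewrite ltr_pwDl // sqr_ge0.
have E : aa s - aa t = 2 * (t - s) * (t + s) / ((1 + s ^+ 2) * (1 + t ^+ 2)).
  by rewrite /aa; field; rewrite !gt_eqF.
have D0 : 0 < (1 + s ^+ 2) * (1 + t ^+ 2) by rewrite mulr_gt0.
have D1 : 1 <= (1 + s ^+ 2) * (1 + t ^+ 2).
  have hs : 1 <= 1 + s ^+ 2 by rewrite lerDl sqr_ge0.
  have ht : 1 <= 1 + t ^+ 2 by rewrite lerDl sqr_ge0.
  by apply: le_trans hs _; rewrite ler_peMr // ltW.
rewrite E normrM normfV (ger0_norm (ltW D0)) ler_pdivrMr //.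
rewrite !normrM [`|2|]ger0_norm // [`|t + s|]ger0_norm ?addr_ge0 // distrC.
have z0 := normr_ge0 (s - t).
move: (`|s - t|) z0 => z z0.
move: ((1 + s ^+ 2) * (1 + t ^+ 2)) D0 D1 => D D0 D1.
apply: (le_trans (y := 4 * z)).
  have : 2 * z * (t + s) <= 2 * z * 2 by rewrite ler_wpM2l ?mulr_ge0 //; lra.
  by move=> h; apply: le_trans h _; lra.
by rewrite ler_peMr ?mulr_ge0.
Qed.

Lemma bb_lip (s t : R) : 0 <= s <= 1 -> 0 <= t <= 1 -> `|bb s - bb t| <= 2 * `|s - t|.
Proof.
case/andP => s0 s1; case/andP => t0 t1.
have ds : 0 < 1 + s ^+ 2 by rewrite ltr_pwDl // sqr_ge0.
have dt : 0 < 1 + t ^+ 2 by rewrite ltr_pwDl // sqr_ge0.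
have E : bb s - bb t = 2 * (s - t) * (1 - s * t) / ((1 + s ^+ 2) * (1 + t ^+ 2)).
  by rewrite /bb; field; rewrite !gt_eqF.
have D0 : 0 < (1 + s ^+ 2) * (1 + t ^+ 2) by rewrite mulr_gt0.
have D1 : 1 <= (1 + s ^+ 2) * (1 + t ^+ 2).
  have hs : 1 <= 1 + s ^+ 2 by rewrite lerDl sqr_ge0.
  have ht : 1 <= 1 + t ^+ 2 by rewrite lerDl sqr_ge0.
  by apply: le_trans hs _; rewrite ler_peMr // ltW.
have st1 : s * t <= 1 by rewrite mulr_ile1.
have st0 : 0 <= s * t by rewrite mulr_ge0.
rewrite E normrM normfV (ger0_norm (ltW D0)) ler_pdivrMr //.
rewrite !normrM [`|2|]ger0_norm // [`|1 - s * t|]ger0_norm ?subr_ge0 //.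
have z0 := normr_ge0 (s - t).
move: (`|s - t|) z0 => z z0.
move: ((1 + s ^+ 2) * (1 + t ^+ 2)) D0 D1 => D D0 D1.
apply: (le_trans (y := 2 * z)).
  have : 2 * z * (1 - s * t) <= 2 * z * 1 by rewrite ler_wpM2l ?mulr_ge0 //; lra.
  by rewrite mulr1.
by rewrite ler_peMr ?mulr_ge0.
Qed.
Definition Kc : R := nrm (1%:M : 'M[C]_N) + nrm (Fl R n).

Lemma Kc_ge0 : 0 <= Kc.
Proof. by rewrite addr_ge0 ?nrm_ge0. Qed.

Lemma hU (r : R) : 0 <= r <= 1 -> nrm (Ut r) <= Kc.
Proof.
move=> hr; have [ha hb] := in01_ab hr; apply: le_trans (nrm_U2 _ _) _.
by apply: lerD; apply: ler_piMl; rewrite ?nrm_ge0.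
Qed.

Lemma hD_aux (A B z x y : R) : 0 <= A -> 0 <= B -> 0 <= z ->
  x * A <= 4 * z * A -> y * B <= 2 * z * B -> x * A + y * B <= 6 * (A + B) * z.
Proof.
move=> A0 B0 z0 h1 h2.
apply: le_trans (lerD h1 h2) _.
rewrite -subr_ge0.
have -> : 6 * (A + B) * z - (4 * z * A + 2 * z * B) = 2 * (z * A) + 4 * (z * B) by ring.
by rewrite addr_ge0 // mulr_ge0 // mulr_ge0.
Qed.

Lemma hD (s t : R) : 0 <= s <= 1 -> 0 <= t <= 1 -> nrm (Ut s - Ut t) <= 6 * Kc * `|s - t|.
Proof.
move=> hs ht.
rewrite U_diff; apply: le_trans (nrm_U2 _ _) _.
apply: hD_aux; rewrite ?nrm_ge0 ?normr_ge0 //.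
  by rewrite ler_wpM2r ?nrm_ge0 // aa_lip.
by rewrite ler_wpM2r ?nrm_ge0 // bb_lip.
Qed.
Lemma sig_lip (a : 'M[C]_n) (s t : R) : 0 <= s <= 1 -> 0 <= t <= 1 ->
  nrm (sig a s - sig a t) <= (12 * Kc * Kc * nrm (p0 a)) * `|s - t|.
Proof.
move=> hs ht.
have K0 := Kc_ge0.
have hD0 : 0 <= 6 * Kc * `|s - t| by rewrite !mulr_ge0.
have b1 : nrm ((Ut s - Ut t) *m p0 a *m mxstar (Ut s)) <= 6 * Kc * `|s - t| * nrm (p0 a) * Kc.
  apply: le_trans (nrmM _ _) _; rewrite nrm_star.
  apply: ler_pM; [exact: nrm_ge0 | exact: nrm_ge0 | | exact: hU].
  apply: le_trans (nrmM _ _) _.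
  by apply: ler_pM; [exact: nrm_ge0 | exact: nrm_ge0 | exact: hD | ].
have b2 : nrm (Ut t *m p0 a *m mxstar (Ut s - Ut t)) <= Kc * nrm (p0 a) * (6 * Kc * `|s - t|).
  apply: le_trans (nrmM _ _) _; rewrite nrm_star.
  apply: ler_pM; [exact: nrm_ge0 | exact: nrm_ge0 | | exact: hD].
  apply: le_trans (nrmM _ _) _.
  by apply: ler_pM; [exact: nrm_ge0 | exact: nrm_ge0 | exact: hU | ].
rewrite sig_diff; apply: le_trans (nrmD _ _) _.
apply: le_trans (lerD b1 b2) _.
by rewrite le_eqVlt; apply/orP; left; apply/eqP; ring.
Qed.

Lemma lip_aux (M z e : R) : 0 <= M -> 0 <= z -> 0 < e -> z < e / (M + 1) -> M * z < e.
Proof.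
move=> M0 z0 e0 hz.
have M1 : 0 < M + 1 by lra.
apply: le_lt_trans (_ : M * z <= M * (e / (M + 1))) _.
  by rewrite ler_wpM2l // ltW.
rewrite mulrA ltr_pdivrMr // mulrDr mulr1 [e * M]mulrC ltrDl //.
Qed.

Lemma sig_cont (a : 'M[C]_n) : cont01 (B := MxC R N) (sig a).
Proof.
move=> t ht e e0.
have M0 : 0 <= 12 * Kc * Kc * nrm (p0 a) by rewrite !mulr_ge0 ?Kc_ge0 ?nrm_ge0.
exists (e / (12 * Kc * Kc * nrm (p0 a) + 1)).
  by rewrite divr_gt0 // ltr_pwDr.
move=> s hs hst.
apply: le_lt_trans (sig_lip a hs ht) _.
by apply: lip_aux.
Qed.
Lemma TC1 : TC_witness R n 1.
Proof.
exists (fun _ => MxC R N), (fun _ x => x), (fun _ a t => sig a t).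
split.
- by move=> i; split.
- by move=> i y; exists y.
- by move=> x H; apply: (H ord0).
- by move=> i; split; [exact: sig_cont | move=> t _; exact: sig_hom].
- by move=> i a; split; [exact: sig0 | exact: sig1].
Qed.

Lemma TC0 : (0 < n)%N -> ~ TC_witness R n 0.
Proof.
move=> n0 [B [q [sg [_ _ Hk _ _]]]].
have := Hk 1%:M (fun i => match i with Ordinal _ hi => False_ind _ (notF hi) end).
have k0 : (0 < n * n)%N by rewrite muln_gt0 n0.
move/matrixP/(_ (Ordinal k0) (Ordinal k0)); rewrite !mxE eqxx /= => /eqP.
by rewrite oner_eq0.
Qed.
End Path.

Theorem mainTheorem10 (R : realType) (n : nat) : (0 < n)%N -> TC_eq R n 1.
Proof.
move=> n0; split; first exact: TC1.
by move=> j; rewrite ltnS leqn0 => /eqP ->; exact: TC0.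
Qed.
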